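(* Let $Q$ be a finite set of points in $\mathbb{R}^d$ with a partition $Q=\bigcup_{l=1}^jQ_l$ into pairwise disjoint nonempty sets. Let $o$ be the mean point of $Q$, $o_l$ the mean point of $Q_l$ ($1\le l\le j$), $\delta^2=\frac1{|Q|}\sum_{q\in Q}\|q-o\|^2$, and $\mathcal{V}$ the simplex (convex hull) determined by $\{o_1,\dots,o_j\}$. Then for any $0<\epsilon\le1$ one can construct, from the points $o_1,\dots,o_j$ and $\epsilon$ alone, a grid $G\subset\mathcal{V}$ of size $O((8j/\epsilon)^j)$ such that at least one grid point $\tau\in G$ satisfies $\|\tau-o\|\le\sqrt{\epsilon}\,\delta$.
   Context: The implied constant in $O((8j/\epsilon)^j)$ may depend on $j$ (in the paper $j\le k$ is a fixed constant). *)

(* Defs.v *)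
From mathcomp Require Import all_boot all_order all_algebra.
From mathcomp Require Export reals.
Set Implicit Arguments. Unset Strict Implicit. Unset Printing Implicit Defensive.
Import Order.TTheory GRing.Theory Num.Theory.
Local Open Scope ring_scope.

Definition enorm (R : realType) (d : nat) (v : 'rV[R]_d) : R :=
  Num.sqrt (\sum_(i < d) v 0 i ^+ 2).

Definition mean (R : realType) (d n : nat) (q : 'I_n -> 'rV[R]_d) : 'rV[R]_d :=
  (n%:R)^-1 *: \sum_(i < n) q i.

(* Mean point of the part Q_l = { q i | p i = l }. *)
Definition cluster_mean (R : realType) (d n j : nat)
    (q : 'I_n -> 'rV[R]_d) (p : 'I_n -> 'I_j) (l : 'I_j) : 'rV[R]_d :=
  (#|[set i | p i == l]|%:R)^-1 *: \sum_(i < n | p i == l) q i.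

Definition variance (R : realType) (d n : nat) (q : 'I_n -> 'rV[R]_d) : R :=
  (n%:R)^-1 * \sum_(i < n) enorm (q i - mean q) ^+ 2.

Definition in_hull (R : realType) (d j : nat) (o : 'I_j -> 'rV[R]_d) (x : 'rV[R]_d) : Prop :=
  exists lam : 'I_j -> R,
    (forall l, 0 <= lam l) /\ \sum_(l < j) lam l = 1 /\ x = \sum_(l < j) lam l *: o l.

(* Main.v *)
Require Import Defs.
From mathcomp Require Import all_boot all_order all_algebra.
From mathcomp Require Import reals.
From mathcomp Require Import ring lra.
Import Order.TTheory GRing.Theory Num.Theory.
Local Open Scope ring_scope.
Lemma CS_big (R : realFieldType) (I : Type) (r : seq I) (P : pred I) (F : I -> R) :
  (\sum_(i <- r | P i) F i) ^+ 2 <= (\sum_(i <- r | P i) 1) * \sum_(i <- r | P i) F i ^+ 2.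
Proof.
elim: r => [|x r IH]; first by rewrite !big_nil; lra.
rewrite !big_cons; case: (P x) => //.
set s := \sum_(i <- r | P i) F i in IH *.
set c := \sum_(i <- r | P i) (1:R) in IH *.
set Q := \sum_(i <- r | P i) F i ^+ 2 in IH *.
have c0 : 0 <= c by apply: sumr_ge0.
have Q0 : 0 <= Q by apply: sumr_ge0 => i _; apply: sqr_ge0.
have [ce|cp] := eqVneq c 0.
  have s0 : s = 0.
    apply/eqP; rewrite -sqrf_eq0 eq_le sqr_ge0 andbT.
    by rewrite ce mul0r in IH.
  rewrite s0 ce; nra.
have cpos : 0 < c by rewrite lt_def cp c0.
have h1 : 0 <= (s - c * F x) ^+ 2 by apply: sqr_ge0.
have h2 : 0 <= c * (Q + c * F x ^+ 2 - 2 * s * F x) by nra.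
have h3 : 0 <= Q + c * F x ^+ 2 - 2 * s * F x.
  by rewrite -(pmulr_rge0 _ cpos).
nra.
Qed.

Lemma cluster_ineq (R : realFieldType) (n : nat) (P : pred 'I_n) (y : 'I_n -> R) (c m : R) :
  0 < \sum_(i < n | P i) (1:R) ->
  \sum_(i < n | P i) y i = (\sum_(i < n | P i) (1:R)) * m ->
  (\sum_(i < n | P i) (1:R)) * (m - c) ^+ 2 <= \sum_(i < n | P i) (y i - c) ^+ 2.
Proof.
set k := \sum_(i < n | P i) (1:R) => kp hs.
have := @CS_big R _ (index_enum 'I_n) P (fun i => y i - c).
rewrite sumrB hs -/k.
have -> : \sum_(i < n | P i) c = k * c by rewrite /k mulr_suml; apply: eq_bigr => i _; rewrite mul1r.
rewrite -mulrBr exprMn expr2 -mulrA.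
by rewrite ler_pM2l // -expr2.
Qed.

Lemma part_sum (V : nmodType) (n j : nat) (p : 'I_n -> 'I_j) (F : 'I_n -> V) :
  \sum_(i < n) F i = \sum_(l < j) \sum_(i < n | p i == l) F i.
Proof. by rewrite (partition_big p xpredT). Qed.

Theorem lemma1 (R : realType) (j : nat) : (0 < j)%N ->
  exists C : R, 0 < C /\
  forall (d : nat) (eps : R) (o : 'I_j -> 'rV[R]_d),
    0 < eps -> eps <= 1 ->
    exists G : seq 'rV[R]_d,
      (forall g, g \in G -> in_hull o g) /\
      (size G)%:R <= C * (8 * j%:R / eps) ^+ j /\
      forall (n : nat) (q : 'I_n -> 'rV[R]_d) (p : 'I_n -> 'I_j),
        injective q ->
        (forall l, exists i, p i = l) ->
        (forall l, cluster_mean q p l = o l) ->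
        exists2 tau, tau \in G &
          enorm (tau - mean q) <= Num.sqrt eps * Num.sqrt (variance q).
Proof.
case: j => [//|j] _.
set J : R := j.+1%:R.
have J1 : 1 <= J by rewrite /J ler1n.
exists (J ^+ j.+1); split; first by rewrite exprn_gt0 // (lt_le_trans ltr01 J1).
move=> d eps o ep e1.
set a : R := J ^+ 2 / eps.
have a1 : 1 <= a.
  rewrite /a ler_pdivlMr // mul1r; apply: (le_trans e1).
  by rewrite expr2; nra.
set N := (Num.truncn a).+1.
have Nlo : a <= N%:R by rewrite /N ltW // truncnS_gt.
have Nhi : N%:R <= a + 1.
  by rewrite /N -addn1 natrD lerD2r truncn_le (le_trans ler01 a1).
have Npos : 0 < N%:R :> R by apply: lt_le_trans Nlo; apply: lt_le_trans a1.
pose gp (f : {ffun 'I_j.+1 -> 'I_N.+1}) : 'rV[R]_d :=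
  if (\sum_l (f l : nat) == N)%N then \sum_l ((f l)%:R / N%:R) *: o l else o ord0.
exists [seq gp f | f <- enum {ffun 'I_j.+1 -> 'I_N.+1}].
split; [|split].
- move=> g /mapP [f _ ->]; rewrite /gp; case: ifP => [/eqP hs|_].
    exists (fun l => (f l)%:R / N%:R); split; [|split] => //.
      by move=> l; rewrite divr_ge0 // ltW.
    by rewrite -mulr_suml -natr_sum hs mulfV // lt0r_neq0.
  exists (fun l => (l == ord0)%:R); split; [|split].
  + by move=> l; rewrite ler0n.
  + rewrite (bigD1 ord0) //= big1 ?addr0 // => l /negbTE ->; by [].
  + rewrite (bigD1 ord0) //= scale1r big1 ?addr0 // => l /negbTE ->.
    by rewrite scale0r.
- rewrite size_map -cardE card_ffun !card_ord natrX -exprMn.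
  apply: lerXn2r; rewrite ?nnegrE ?ler0n //.
    by apply: mulr_ge0; [lra| apply: divr_ge0; lra].
  have -> : J * (8 * J / eps) = 8 * a by rewrite /a expr2; field; lra.
  rewrite -addn1 natrD; lra.
move=> n q p _ psurj hcm.
pose nl (l : 'I_j.+1) := #|[set i | p i == l]|.
have nlR : forall l, (nl l)%:R = \sum_(i < n | p i == l) (1:R).
  move=> l; rewrite /nl -sum1_card natr_sum; apply: eq_bigl => i; by rewrite inE.
have nl_pos : forall l, (0 < nl l)%N.
  move=> l; case: (psurj l) => i <-; apply/card_gt0P; exists i; by rewrite inE.
have nsum : n%:R = \sum_l (nl l)%:R :> R.
  rewrite (eq_bigr _ (fun l _ => nlR l)) -part_sum sumr_const card_ord; by [].
have npos : 0 < n%:R :> R.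
  case: (psurj ord0) => i _; rewrite ltr0n; exact: (leq_ltn_trans (leq0n i) (ltn_ord i)).
have nlRpos : forall l, 0 < (nl l)%:R :> R by move=> l; rewrite ltr0n.
have hsum : forall l, \sum_(i < n | p i == l) q i = (nl l)%:R *: o l.
  move=> l; rewrite -(hcm l) /cluster_mean scalerA mulfV ?scale1r //.
  exact: lt0r_neq0 (nlRpos l).
pose w (l : 'I_j.+1) : R := (nl l)%:R / n%:R.
have w0 : forall l, 0 <= w l by move=> l; rewrite divr_ge0 // ltW.
have wsum : \sum_l w l = 1 by rewrite -mulr_suml -nsum mulfV // lt0r_neq0.
have hmean : mean q = \sum_l w l *: o l.
  rewrite /mean (@part_sum _ _ _ p) (eq_bigr _ (fun l _ => hsum l)) scaler_sumr.
  by apply: eq_bigr => l _; rewrite scalerA mulrC.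
have [m _ hm] := arg_maxnP nl (erefl true : xpredT ord0).
have wm : 1 <= J * w m.
  rewrite /w mulrA ler_pdivlMr // mul1r nsum.
  apply: (@le_trans _ _ (\sum_(l < j.+1) (nl m)%:R)).
    by apply: ler_sum => l _; rewrite ler_nat; apply: hm.
  by rewrite sumr_const card_ord mulr_natl.
pose k l := ((N * nl l) %/ n)%N.
have n0 : (0 < n)%N by rewrite -(ltr0n R).
have kb : forall l, (k l)%:R <= N%:R * w l /\ N%:R * w l < (k l)%:R + 1.
  move=> l; rewrite /w mulrA; split.
    rewrite ler_pdivlMr // -natrM -natrM ler_nat; exact: leq_divM.
  rewrite ltr_pdivrMr // -natrM -[_ + 1](natrD R _ 1) -natrM ltr_nat addn1; exact: ltn_ceil.
pose S := (\sum_(l | l != m) k l)%N.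
have SR : S%:R <= N%:R :> R.
  rewrite /S natr_sum.
  apply: (@le_trans _ _ (\sum_(l | l != m) N%:R * w l)).
    by apply: ler_sum => l _; case: (kb l).
  apply: (@le_trans _ _ (\sum_l N%:R * w l)).
    rewrite [X in _ <= X](bigD1 m) //= lerDr; apply: mulr_ge0; [exact: ltW | exact: w0].
  by rewrite -mulr_sumr wsum mulr1.
have SN : (S <= N)%N by rewrite -(ler_nat R).
pose fn l := if l == m then (N - S)%N else k l.
have fnN : forall l, (fn l <= N)%N.
  move=> l; rewrite /fn; case: ifP => [_|/negbT lm]; first exact: leq_subr.
  apply: leq_trans SN; rewrite /S (bigD1 l) //=; exact: leq_addr.
pose f := [ffun l => inord (fn l) : 'I_N.+1].
have fE : forall l, (f l : nat) = fn l by move=> l; rewrite ffunE inordK // ltnS fnN.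
have fnsum : (\sum_l fn l = N)%N.
  rewrite (bigD1 m) //= /fn eqxx.
  rewrite (eq_bigr k); last by move=> l /negbTE ->.
  by rewrite -/S subnK.
have fsum : (\sum_l (f l : nat) = N)%N by rewrite (eq_bigr _ (fun l _ => fE l)).
pose lam l := (fn l)%:R / N%:R : R.
exists (gp f); first by apply: map_f; rewrite mem_enum.
have gpf : gp f = \sum_l lam l *: o l.
  rewrite /gp fsum eqxx; apply: eq_bigr => l _; by rewrite fE.
pose D l := lam l - w l.
have lamsum : \sum_l lam l = 1.
  by rewrite -mulr_suml -natr_sum fnsum mulfV // lt0r_neq0.
have Dsum : \sum_l D l = 0 by rewrite sumrB lamsum wsum subrr.
have epsa : eps * a = J ^+ 2 by rewrite /a; field; lra.
have J2 : J <= J ^+ 2 by rewrite expr2; nra.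
have epsN : J ^+ 2 <= eps * N%:R by rewrite -epsa; apply: ler_wpM2l; lra.
have aJ : J ^+ 2 <= a by rewrite /a ler_pdivlMr // ; nra.
have Dneg : forall l, l != m -> - 1 < D l * N%:R <= 0 /\ - (N%:R * w l) <= D l * N%:R.
  move=> l lm; have [k1 k2] := kb l.
  have -> : D l * N%:R = (k l)%:R - N%:R * w l.
    rewrite /D /lam /fn (negbTE lm); field; lra.
  have k0 : 0 <= (k l)%:R :> R by rewrite ler0n.
  split; [apply/andP; split|]; lra.
have Dbound : forall l, J * D l ^+ 2 <= eps * w l.
  move=> l; have [->|lm] := eqVneq l m.
    have Dm : D m = - \sum_(l | l != m) D l.
      by apply/eqP; rewrite -addr_eq0 -[X in _ == X]Dsum [X in _ == X](bigD1 m).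
    have h0 : 0 <= D m * N%:R <= J.
      rewrite Dm mulNr mulr_suml -sumrN; apply/andP; split.
        apply: sumr_ge0 => l0 lm0; have [/andP [_ h] _] := Dneg l0 lm0; lra.
      apply: (@le_trans _ _ (\sum_(l | l != m) (1:R))).
        apply: ler_sum => l0 lm0; have [/andP [h _] _] := Dneg l0 lm0; lra.
      apply: (@le_trans _ _ (\sum_(l < j.+1) (1:R))).
        rewrite [X in _ <= X](bigD1 m) //= lerDr; lra.
      by rewrite sumr_const card_ord.
    have wm0 := w0 m.
    move: h0 => /andP [y0 yJ].
    have h1 : J * (D m * N%:R) ^+ 2 <= eps * w m * N%:R ^+ 2.
      have y2 : (D m * N%:R) ^+ 2 <= J ^+ 2.
        by rewrite lerXn2r // nnegrE; lra.
      have J0 : 0 <= J by lra.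
      have h2 : J * (D m * N%:R) ^+ 2 <= J * J ^+ 2 by apply: ler_wpM2l.
      apply: le_trans h2 _.
      have h4 : J ^+ 2 <= N%:R by lra.
      have J20 : 0 <= J ^+ 2 by apply: sqr_ge0.
      have h5 : J ^+ 2 * J ^+ 2 <= eps * N%:R * N%:R by nra.
      have h6 : J * J ^+ 2 <= J ^+ 2 * J ^+ 2 * w m.
        have hJw : J <= J ^+ 2 * w m by rewrite expr2 -mulrA; nra.
        have := ler_wpM2l J20 hJw; lra.
      apply: le_trans h6 _; rewrite expr2; nra.
    rewrite exprMn mulrA in h1.
    by rewrite -(ler_pM2r (exprn_gt0 2 Npos)).
  have [/andP [h1 h2] h3] := Dneg l lm.
  have wl := w0 l.
  have h4 : (D l * N%:R) ^+ 2 <= N%:R * w l by nra.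
  have h5 : D l ^+ 2 * N%:R <= w l.
    rewrite -(ler_pM2l Npos); move: h4; rewrite exprMn; nra.
  have h6 : J <= eps * N%:R by lra.
  have h7 : 0 <= D l ^+ 2 by apply: sqr_ge0.
  nra.
set o' := mean q.
have hdiff : gp f - o' = \sum_l D l *: (o l - o').
  under [RHS]eq_bigr do rewrite scalerBr.
  rewrite sumrB -scaler_suml Dsum scale0r subr0.
  rewrite /D; under [RHS]eq_bigr do rewrite scalerBl.
  by rewrite sumrB gpf /o' -hmean.
have var_eq : variance q = n%:R^-1 * \sum_(i < n) \sum_(kk < d) (q i 0 kk - o' 0 kk) ^+ 2.
  rewrite /variance; congr (_ * _); apply: eq_bigr => i _.
  rewrite /enorm sqr_sqrtr; last by apply: sumr_ge0 => kk _; apply: sqr_ge0.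
  by apply: eq_bigr => kk _; rewrite !mxE.
have var0 : 0 <= variance q.
  rewrite var_eq; apply: mulr_ge0; first by rewrite invr_ge0 ler0n.
  by apply: sumr_ge0 => i _; apply: sumr_ge0 => kk _; apply: sqr_ge0.
rewrite -sqrtrM; last exact: ltW.
rewrite /enorm ler_sqrt; last exact: mulr_ge0 (ltW ep) var0.
have -> : eps * variance q = \sum_(kk < d) \sum_(l < j.+1)
    (eps * n%:R^-1) * \sum_(i < n | p i == l) (q i 0 kk - o' 0 kk) ^+ 2.
  rewrite var_eq mulrA exchange_big /= mulr_sumr; apply: eq_bigr => kk _.
  by rewrite (@part_sum _ _ _ p) mulr_sumr.
apply: ler_sum => kk _.
have ek : (gp f - o') 0 kk = \sum_l D l * (o l 0 kk - o' 0 kk).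
  rewrite hdiff summxE; apply: eq_bigr => l _; by rewrite !mxE.
rewrite ek.
apply: le_trans (@CS_big R _ (index_enum 'I_j.+1) xpredT (fun l => D l * (o l 0 kk - o' 0 kk))) _.
rewrite sumr_const card_ord -/J mulr_sumr.
apply: ler_sum => l _.
have cl := @cluster_ineq R n (fun i => p i == l) (fun i => q i 0 kk) (o' 0 kk) (o l 0 kk).
rewrite -nlR in cl.
have cl2 := cl (nlRpos l).
have hs : \sum_(i < n | p i == l) q i 0 kk = (nl l)%:R * o l 0 kk.
  by rewrite -summxE hsum mxE.
have := cl2 hs.
move=> H.
have Db := Dbound l.
have x0 : 0 <= (o l 0 kk - o' 0 kk) ^+ 2 by apply: sqr_ge0.
rewrite exprMn mulrA; apply: le_trans (ler_wpM2r x0 Db) _.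
have -> : eps * w l * (o l 0 kk - o' 0 kk) ^+ 2 =
    eps / n%:R * ((nl l)%:R * (o l 0 kk - o' 0 kk) ^+ 2).
  by rewrite /w; field; rewrite lt0r_neq0.
apply: ler_wpM2l => //; apply: divr_ge0; [exact: ltW | exact: ler0n].
Qed.
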